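(* Let $x_1,x_2,x_3>0$, $\gamma,\delta>0$ with $\gamma\ne1\ne\delta$, and let $$\mathbf{Q}=\begin{pmatrix}1&\delta x_1&x_2&x_3\\ 1/(\delta x_1)&1&x_2/x_1&x_3/x_1\\ 1/x_2&x_1/x_2&1&\gamma x_3/x_2\\ 1/x_3&x_1/x_3&x_2/(\gamma x_3)&1\end{pmatrix}$$ with principal right eigenvector $\mathbf{w}^{EM}$. If $\delta>1$ and $\gamma<1$, then $w_1^{EM}/w_3^{EM}>x_2$.
   Context: The principal right eigenvector is the positive (Perron) eigenvector belonging to the largest eigenvalue. *)

(* Defs.v *)
From HB Require Import structures.
From mathcomp Require Import all_boot all_order all_algebra.
From mathcomp Require Import all_reals.
Set Implicit Arguments. Unset Strict Implicit. Unset Printing Implicit Defensive.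
Import Order.TTheory GRing.Theory Num.Theory.
Local Open Scope ring_scope.

(* The 4x4 matrix Q of the paper (indices 0..3 correspond to 1..4). *)
Definition Qmx (R : realType) (x1 x2 x3 gamma delta : R) : 'M[R]_4 :=
  \matrix_(i < 4, j < 4)
    match nat_of_ord i, nat_of_ord j with
    | 0, 0 => 1 | 0, 1 => delta * x1 | 0, 2 => x2 | 0, _ => x3
    | 1, 0 => (delta * x1)^-1 | 1, 1 => 1 | 1, 2 => x2 / x1 | 1, _ => x3 / x1
    | 2, 0 => x2^-1 | 2, 1 => x1 / x2 | 2, 2 => 1 | 2, _ => gamma * x3 / x2
    | _, 0 => x3^-1 | _, 1 => x1 / x3 | _, 2 => x2 / (gamma * x3) | _, _ => 1
    end.

Definition principal_right_eigenvector (R : realType) (n : nat)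
    (A : 'M[R]_n) (w : 'cV[R]_n) : Prop :=
  (forall i, 0 < w i 0) /\
  exists lambda : R, A *m w = lambda *: w /\
    eigenvalue A lambda /\ (forall mu : R, eigenvalue A mu -> mu <= lambda).

(* Main.v *)
Require Import Defs.
From mathcomp Require Import all_boot all_order all_algebra.
From mathcomp Require Import all_reals.
From mathcomp Require Import ring lra.
Import Order.TTheory GRing.Theory Num.Theory.
Local Open Scope ring_scope.

Theorem mainTheorem12 (R : realType) (x1 x2 x3 gamma delta : R)
  (w : 'cV[R]_4) :
  0 < x1 -> 0 < x2 -> 0 < x3 -> 0 < gamma -> 0 < delta ->
  gamma != 1 -> delta != 1 ->
  principal_right_eigenvector (Qmx x1 x2 x3 gamma delta) w ->
  1 < delta -> gamma < 1 ->
  w (@Ordinal 4 0 isT) 0 / w (@Ordinal 4 2 isT) 0 > x2.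
Proof.
move=> hx1 hx2 hx3 hg hd _ _ [wpos [l [Heq _]]] hd1 hg1.
have h0 := congr1 (fun M : 'M[R]_(4,1) => M (@Ordinal 4 0 isT) 0) Heq.
have h2 := congr1 (fun M : 'M[R]_(4,1) => M (@Ordinal 4 2 isT) 0) Heq.
move: h0 h2; rewrite /= !mxE !big_ord_recl !big_ord0 /= !mxE /=.
have -> : (@Ordinal 4 0 isT) = ord0 by apply: val_inj.
have -> : (@Ordinal 4 2 isT) = lift ord0 (lift ord0 ord0) by apply: val_inj.
have ha := wpos ord0; have hb := wpos (lift ord0 ord0).
have hc := wpos (lift ord0 (lift ord0 ord0)).
have hdd := wpos (lift ord0 (lift ord0 (lift ord0 ord0))).
move: ha hb hc hdd.
set a := w _ 0; set b := w _ 0; set c := w _ 0; set d := w _ 0.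
move=> ha hb hc hdd h0 h2.
have e1 : (l - 1) * a = delta * x1 * b + x2 * c + x3 * d by rewrite mulrBl mul1r -h0; ring.
have e2 : l * (a - x2 * c) = (delta - 1) * x1 * b + (1 - gamma) * x3 * d.
  have h2' : x2 * (l * c) = a + x1 * b + x2 * c + gamma * x3 * d.
    rewrite -h2; field; exact: lt0r_neq0.
  have -> : l * (a - x2 * c) = (l - 1) * a + a - x2 * (l * c) by ring.
  rewrite e1 h2'; ring.
have p1 : 0 < (l - 1) * a by rewrite e1; apply: addr_gt0; [apply: addr_gt0|]; apply: mulr_gt0 => //; apply: mulr_gt0.
have hl : 0 < l - 1 by rewrite (pmulr_lgt0 _ ha) in p1.
have hl0 : 0 < l by rewrite subr_gt0 in hl; apply: lt_trans hl.
have p2 : 0 < l * (a - x2 * c).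
  have hd' : 0 < delta - 1 by rewrite subr_gt0.
  have hg' : 0 < 1 - gamma by rewrite subr_gt0.
  by rewrite e2 addr_gt0 // !mulr_gt0.
rewrite (pmulr_rgt0 _ hl0) subr_gt0 in p2.
by rewrite ltr_pdivlMr.
Qed.
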